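(* Let $n\geq1$ be an integer and $z\in\mathbb{C}$ with $|z|<1$ and $|1-z|\left(n+\frac12\right)<1$. Then \[ \left|\sum_{k=n+1}^\infty\frac{z^k}{k}\right|< |z|^{n+1}\left(-\log\left(|1-z|\left(n+\frac{1}{2}\right)\right)+C_3\right),\qquad C_3=\sqrt{(\pi/2)^2+1}. \] *)

(* Defs.v *)
From Stdlib Require Import Reals.
From Coquelicot Require Export Coquelicot.
Open Scope R_scope.

Definition C3 : R := sqrt ((PI / 2) ^ 2 + 1).

(* the k-th term (k >= 0) of the tail  sum_{j=n+1}^oo z^j / j , j = n+1+k *)
Definition tail_term (n : nat) (z : C) (k : nat) : C :=
  Cdiv (Cpow z (n + 1 + k)) (RtoC (INR (n + 1 + k))).

(* Main.v *)
Require Import Defs.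
From Stdlib Require Import Reals Lra Lia ZArith.
From Coquelicot Require Import Coquelicot.
Open Scope R_scope.
Lemma harm_step k : 1 <= k -> / k <= ln (k + /2) - ln (k - /2).
Proof.
  intros Hk.
  set (f := fun t => ln (k + t) - ln (k - t) - 2 * t / k).
  set (f' := fun t => / (k + t) + / (k - t) - 2 / k).
  destruct (MVT_cor2 f f' 0 (/2)) as [c [Hc1 Hc2]]. lra.
  { intros c Hc. apply is_derive_Reals. unfold f, f'.
    auto_derive. repeat split; lra. field. repeat split; lra. }
  assert (Hf0 : f 0 = 0). { unfold f. rewrite Rplus_0_r, Rminus_0_r. field. lra. }
  assert (Hpos : 0 <= f' c).
  { unfold f'. assert (k + c > 0) by lra. assert (k - c > 0) by lra.
    replace (/ (k + c) + / (k - c) - 2 / k) with (2 * c * c / (k * (k+c) * (k-c))) by (field; lra).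
    apply Rle_mult_inv_pos. nra. apply Rmult_lt_0_compat. nra. lra. }
  unfold f in Hc1, Hf0. rewrite Hf0 in Hc1.
  assert (ln (k + / 2) - ln (k - / 2) - 2 * / 2 / k >= 0) by nra.
  assert (2 * / 2 / k = / k) by (field; lra). lra.
Qed.
Lemma e_gt : 8/3 < exp 1.
Proof.
  pose proof (exp_ge_taylor 1 4 ltac:(lra)) as H.
  simpl in H. lra.
Qed.
Lemma ln_le_lin y : 0 < y -> ln y <= 3/8 * y.
Proof.
  intros Hy. pose proof e_gt.
  assert (He : 0 < exp 1) by apply exp_pos.
  assert (H1 : y / exp 1 <= exp (y / exp 1 - 1)).
  { destruct (Req_dec (y / exp 1 - 1) 0) as [E|E].
    - rewrite E, exp_0. lra.
    - pose proof (exp_ineq1 _ E). lra. }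
  assert (ln (y / exp 1) <= y / exp 1 - 1).
  { rewrite <- (ln_exp (y / exp 1 - 1)). apply ln_le. apply Rdiv_lt_0_compat; lra. exact H1. }
  rewrite ln_div in H0 by lra. rewrite ln_exp in H0.
  assert (y / exp 1 <= 3/8 * y).
  { assert (Hi : / exp 1 < / (8/3)) by (apply Rinv_lt_contravar; nra).
    replace (/ (8/3)) with (3/8) in Hi by field. unfold Rdiv. nra. }
  lra.
Qed.

Lemma harm n m : (1 <= n)%nat ->
  sum_n (fun j => / INR (n+1+j)) m <= ln (INR (n+1+m) + /2) - ln (INR n + /2).
Proof.
  intros Hn. induction m.
  - rewrite sum_O. rewrite Nat.add_0_r.
    pose proof (harm_step (INR (n+1)) ltac:(apply (le_INR 1); lia)).
    replace (INR (n+1) - /2) with (INR n + /2) in H by (rewrite plus_INR; simpl; lra). exact H.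
  - rewrite sum_Sn. change plus with Rplus.
    pose proof (harm_step (INR (n+1+S m)) ltac:(apply (le_INR 1); lia)).
    replace (INR (n+1+S m) - /2) with (INR (n+1+m) + /2) in H
      by (replace (n+1+S m)%nat with (S (n+1+m)) by lia; rewrite S_INR; lra).
    lra.
Qed.

Lemma series_bound (a : nat -> C) S B :
  is_series (K := C_AbsRing) (V := C_NormedModule) a S ->
  (forall m, Cmod (sum_n a m) <= B) -> Cmod S <= B.
Proof.
  intros HS Hb.
  assert (Hl : is_lim_seq (fun m => norm (sum_n a m)) (norm S)).
  { unfold is_lim_seq. eapply filterlim_comp. exact HS. apply filterlim_norm. }
  pose proof (is_lim_seq_le _ (fun _ => B) _ _ Hb Hl (is_lim_seq_const B)). exact H.
Qed.

Lemma C3_gt : 9/5 < sqrt ((PI / 2) ^ 2 + 1).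
Proof.
  pose proof PI2_3_2.
  rewrite <- (sqrt_pow2 (9/5)) by lra. apply sqrt_lt_1_alt. split. nra. nra.
Qed.

Lemma RtoC_nz x : x <> 0 -> RtoC x <> RtoC 0.
Proof. intros H E. apply H. change x with (fst (RtoC x)). rewrite E. reflexivity. Qed.

Lemma Cmod_sum (b : nat -> C) m :
  Cmod (sum_n b m) <= sum_n (fun j => Cmod (b j)) m.
Proof.
  induction m.
  - rewrite !sum_O. lra.
  - rewrite !sum_Sn. eapply Rle_trans. apply Cmod_triangle.
    change (plus (sum_n (fun j => Cmod (b j)) m) (Cmod (b (S m))))
      with (sum_n (fun j => Cmod (b j)) m + Cmod (b (S m))). lra.
Qed.

Lemma pow_le1 r k : 0 <= r <= 1 -> r ^ k <= 1.
Proof. intros H. induction k; simpl; nra. Qed.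

Definition gt (z : C) (K j : nat) : C := Cdiv (Cpow z (K + j)) (RtoC (INR (K + j))).

Lemma tail_aux (z : C) (K : nat) L :
  (1 <= K)%nat -> Cmod z <= 1 ->
  Cmod (Cplus (Cmult (Cminus (RtoC 1) z) (sum_n (gt z K) L))
               (Cdiv (Cpow z (K + L + 1)) (RtoC (INR (K + L)))))
  <= Cmod z ^ K / INR K + Cmod z ^ (K + 1) * (/ INR K - / INR (K + L)).
Proof.
  intros HK Hr.
  assert (Hr0 : 0 <= Cmod z) by apply Cmod_ge_0.
  assert (HKp : 1 <= INR K) by (apply (le_INR 1); lia).
  induction L.
  - rewrite sum_O. unfold gt. rewrite !Nat.add_0_r.
    replace (K + 1)%nat with (S K) by lia. simpl Cpow.
    set (d := RtoC (INR K)). set (w := Cpow z K).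
    assert (d <> RtoC 0) by (apply RtoC_nz; lra).
    replace (Cplus (Cmult (Cminus (RtoC 1) z) (Cdiv w d)) (Cdiv (Cmult z w) d))
      with (Cdiv w d) by (field; auto).
    rewrite Cmod_div by auto. unfold w; rewrite Cmod_pow. unfold d. rewrite Cmod_R, Rabs_pos_eq by lra.
    rewrite Rminus_diag, Rmult_0_r. lra.
  - rewrite sum_Sn. change plus with Cplus. unfold gt at 2.
    replace (K + S L + 1)%nat with (S (S (K + L))) by lia.
    replace (K + S L)%nat with (S (K + L)) by lia.
    replace (K + L + 1)%nat with (S (K + L)) in IHL by lia.
    simpl Cpow. simpl Cpow in IHL.
    set (T := sum_n (gt z K) L) in *.
    set (w := Cpow z (K + L)) in *.
    set (x := INR (K + L)) in *.
    assert (Hx : 1 <= x) by (unfold x; apply (le_INR 1); lia).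
    rewrite S_INR. fold x.
    set (E := Cplus (Cmult (Cminus (RtoC 1) z) T) (Cdiv (Cmult z w) (RtoC x))) in *.
    assert (Hd1 : RtoC x <> RtoC 0) by (apply RtoC_nz; lra).
    assert (Hd2 : RtoC (x + 1) <> RtoC 0) by (apply RtoC_nz; lra).
    replace (Cplus (Cmult (Cminus (RtoC 1) z) (Cplus T (Cdiv (Cmult z w) (RtoC (x + 1)))))
               (Cdiv (Cmult z (Cmult z w)) (RtoC (x + 1))))
      with (Cminus E (Cmult (Cmult z w) (RtoC (/ x - / (x + 1))))).
    2:{ unfold E. rewrite RtoC_minus, !RtoC_inv by lra. rewrite RtoC_plus in *. 
        field. split; auto. }
    unfold Cminus. eapply Rle_trans. apply Cmod_triangle.
    rewrite Cmod_opp, Cmod_mult, Cmod_mult. unfold w. rewrite Cmod_pow, Cmod_R.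
    assert (Hxx : 0 <= / x - / (x + 1)).
    { assert (/ (x+1) <= / x) by (apply Rinv_le_contravar; lra). lra. }
    rewrite Rabs_pos_eq by lra.
    assert (Hp : Cmod z * Cmod z ^ (K + L) <= Cmod z ^ (K + 1)).
    { replace (K + L)%nat with (K + L)%nat by lia. rewrite pow_add.
      rewrite pow_add. simpl. pose proof (pow_le1 (Cmod z) L ltac:(lra)).
      pose proof (pow_le (Cmod z) K Hr0). assert (0 <= Cmod z * Cmod z ^ K) by (apply Rmult_le_pos; lra). nra. }
    replace (INR (K + S L)) with (x + 1) by (unfold x; rewrite <- S_INR; f_equal; lia).
    assert (Cmod z * Cmod z ^ (K + L) * (/ x - / (x + 1)) <= Cmod z ^ (K + 1) * (/ x - / (x + 1))) by nra.
    lra.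
Qed.

Lemma tail_bound (z : C) (K : nat) L :
  (1 <= K)%nat -> Cmod z <= 1 -> 0 < Cmod (Cminus (RtoC 1) z) ->
  Cmod (sum_n (gt z K) L) <= 2 * Cmod z ^ K / (INR K * Cmod (Cminus (RtoC 1) z)).
Proof.
  intros HK Hr Hc.
  assert (Hr0 : 0 <= Cmod z) by apply Cmod_ge_0.
  assert (HKp : 1 <= INR K) by (apply (le_INR 1); lia).
  pose proof (tail_aux z K L HK Hr) as H.
  set (T := sum_n (gt z K) L) in *.
  set (F := Cdiv (Cpow z (K + L + 1)) (RtoC (INR (K + L)))) in *.
  set (E := Cplus (Cmult (Cminus (RtoC 1) z) T) F) in *.
  assert (HE : Cmult (Cminus (RtoC 1) z) T = Cplus E (Copp F)) by (unfold E; ring).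
  assert (Hx : 1 <= INR (K + L)) by (apply (le_INR 1); lia).
  assert (HF : Cmod F <= Cmod z ^ (K + 1) / INR (K + L)).
  { unfold F. rewrite Cmod_div by (apply RtoC_nz; lra). rewrite Cmod_pow, Cmod_R, Rabs_pos_eq by lra.
    unfold Rdiv. apply Rmult_le_compat_r. left; apply Rinv_0_lt_compat; lra.
    replace (K + L + 1)%nat with (K + 1 + L)%nat by lia. rewrite pow_add.
    pose proof (pow_le1 (Cmod z) L ltac:(lra)). pose proof (pow_le (Cmod z) (K+1) Hr0). nra. }
  assert (H1 : Cmod (Cminus (RtoC 1) z) * Cmod T <= 2 * Cmod z ^ K / INR K).
  { rewrite <- Cmod_mult, HE. eapply Rle_trans. apply Cmod_triangle. rewrite Cmod_opp.
    assert (Hk1 : Cmod z ^ (K + 1) <= Cmod z ^ K).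
    { rewrite pow_add. simpl. pose proof (pow_le (Cmod z) K Hr0). nra. }
    assert (Cmod z ^ (K + 1) * / INR K <= Cmod z ^ K * / INR K).
    { apply Rmult_le_compat_r. left; apply Rinv_0_lt_compat; lra. lra. }
    unfold Rdiv in *. lra. }
  apply (Rmult_le_reg_l (Cmod (Cminus (RtoC 1) z))). lra.
  replace (Cmod (Cminus (RtoC 1) z) * (2 * Cmod z ^ K / (INR K * Cmod (Cminus (RtoC 1) z))))
    with (2 * Cmod z ^ K / INR K) by (field; lra). exact H1.
Qed.

Lemma sum_mono (h : nat -> R) m m' : (forall j, 0 <= h j) -> (m <= m')%nat -> sum_n h m <= sum_n h m'.
Proof.
  intros Hh Hm. induction Hm. lra. rewrite sum_Sn. change plus with Rplus. specialize (Hh (S m0)). lra.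
Qed.

Lemma sum_split (a : nat -> C) m0 L :
  sum_n a (m0 + 1 + L) = Cplus (sum_n a m0) (sum_n (fun j => a (m0 + 1 + j)%nat) L).
Proof.
  induction L.
  - rewrite sum_O. replace (m0 + 1 + 0)%nat with (S m0) by lia. rewrite sum_Sn. replace (m0 + 1 + 0)%nat with (S m0) by lia. reflexivity.
  - replace (m0 + 1 + S L)%nat with (S (m0 + 1 + L)) by lia. rewrite !sum_Sn. rewrite IHL.
    change plus with Cplus. rewrite <- Cplus_assoc. replace (m0 + 1 + S L)%nat with (S (m0 + 1 + L)) by lia. reflexivity.
Qed.

Theorem theorem7 (n : nat) (z : C) :
  (1 <= n)%nat ->
  Cmod z < 1 ->
  Cmod (Cminus (RtoC 1) z) * (INR n + 1 / 2) < 1 ->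
  exists S : C,
    is_series (K := C_AbsRing) (V := C_NormedModule) (tail_term n z) S /\
    Cmod S < (Cmod z) ^ (n + 1) *
             (- ln (Cmod (Cminus (RtoC 1) z) * (INR n + 1 / 2)) + C3).
Proof.
  intros Hn Hr Hc.
  assert (Hn1 : 1 <= INR n) by (apply (le_INR 1); lia).
  assert (Hr0 : 0 <= Cmod z) by apply Cmod_ge_0.
  assert (Hc0 : 0 < Cmod (Cminus (RtoC 1) z)).
  { apply Cmod_gt_0. intro E. assert (z = RtoC 1).
    { apply Ceq_minus in E. symmetry. exact E. }
    rewrite H, Cmod_1 in Hr. lra. }
  assert (Hrp : 0 < Cmod z).
  { apply Cmod_gt_0. intro E. rewrite E in Hc. unfold Cminus in Hc. rewrite Copp_0, Cplus_0_r, Cmod_1 in Hc. lra. }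
  set (r := Cmod z) in *. set (c := Cmod (Cminus (RtoC 1) z)) in *.
  assert (Hc23 : c < 2/3) by nra.
  set (x := 2 / c - 1/2).
  assert (Hx : 2 * INR n + 1/2 < x).
  { unfold x. assert (INR n + 1/2 < 1/c).
    { apply (Rmult_lt_reg_l c). lra. replace (c * (1/c)) with 1 by (field; lra). lra. }
    unfold Rdiv in *. lra. }
  destruct (archimed x) as [Hu1 Hu2].
  assert (Hup : (0 <= up x)%Z) by (apply le_IZR; lra).
  set (N := Z.to_nat (up x)).
  assert (HN : INR N = IZR (up x)) by (unfold N; rewrite INR_IZR_INZ, Z2Nat.id; auto).
  assert (HnN : (n < N)%nat) by (apply INR_lt; lra).
  set (y := c * (INR N + 1/2)).
  assert (Hy1 : 2 < y).
  { unfold y. rewrite HN. assert (c * (x + 1/2) = 2) by (unfold x; field; lra). nra. }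
  assert (Hy2 : y <= 8/3).
  { unfold y. rewrite HN. assert (c * (x + 1/2) = 2) by (unfold x; field; lra). nra. }
  set (m0 := (N - n - 1)%nat).
  set (H := sum_n (fun j => / INR (n+1+j)) m0).
  set (Bd := r ^ (n+1) * (H + 2 / y)).
  assert (Hterm : forall j, Cmod (tail_term n z j) <= r ^ (n+1) * / INR (n+1+j)).
  { intro j. unfold tail_term. assert (1 <= INR (n+1+j)) by (apply (le_INR 1); lia).
    rewrite Cmod_div by (apply RtoC_nz; lra). rewrite Cmod_pow, Cmod_R, Rabs_pos_eq by lra.
    fold r. unfold Rdiv. apply Rmult_le_compat_r. left; apply Rinv_0_lt_compat; lra.
    rewrite pow_add. pose proof (pow_le1 r j ltac:(lra)). pose proof (pow_le r (n+1) Hr0). nra. }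
  assert (Hh : forall j, 0 <= / INR (n+1+j)).
  { intro j. left. apply Rinv_0_lt_compat. apply (lt_INR 0). lia. }
  assert (Hfirst : forall m, Cmod (sum_n (tail_term n z) m) <= r ^ (n+1) * sum_n (fun j => / INR (n+1+j)) m).
  { intro m. eapply Rle_trans. apply Cmod_sum. induction m.
    - rewrite !sum_O. apply Hterm.
    - rewrite !sum_Sn. change plus with Rplus. specialize (Hterm (S m)). lra. }
  assert (Hrn : 0 < r ^ (n+1)) by (apply pow_lt; lra).
  assert (Hall : forall m, Cmod (sum_n (tail_term n z) m) <= Bd).
  { intro m. destruct (le_lt_dec m m0) as [Hm|Hm].
    - eapply Rle_trans. apply Hfirst. unfold Bd.
      assert (sum_n (fun j => / INR (n+1+j)) m <= H) by (apply sum_mono; auto).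
      assert (0 < 2 / y) by (apply Rdiv_lt_0_compat; lra). nra.
    - set (L := (m - m0 - 1)%nat).
      replace m with (m0 + 1 + L)%nat by (unfold L; lia). rewrite sum_split.
      eapply Rle_trans. apply Cmod_triangle.
      assert (E : sum_n (fun j => tail_term n z (m0+1+j)) L = sum_n (gt z (N+1)) L).
      { apply sum_n_ext; intro j; unfold tail_term, gt.
        replace (n+1+(m0+1+j))%nat with (N+1+j)%nat by (unfold m0; lia). reflexivity. }
      rewrite E. pose proof (tail_bound z (N+1) L ltac:(lia) (Rlt_le _ _ Hr) Hc0) as Ht.
      fold r c in Ht. pose proof (Hfirst m0) as Hf. fold H in Hf.
      assert (Hpw : r ^ (N+1) <= r ^ (n+1)).
      { replace (N+1)%nat with (n+1+(N-n))%nat by lia. rewrite pow_add.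
        pose proof (pow_le1 r (N-n) ltac:(lra)). nra. }
      assert (HD : y <= INR (N+1) * c).
      { unfold y. rewrite plus_INR. simpl. nra. }
      assert (2 * r ^ (N+1) / (INR (N+1) * c) <= 2 * r ^ (n+1) / y).
      { assert (0 <= r^(N+1)) by (apply pow_le; lra).
        unfold Rdiv. apply Rmult_le_compat. lra. left; apply Rinv_0_lt_compat; lra. lra.
        apply Rinv_le_contravar; lra. }
      unfold Bd. unfold Rdiv in *. lra. }
  assert (Hex : ex_series (K := C_AbsRing) (V := C_CompleteNormedModule) (tail_term n z)).
  { apply (ex_series_le _ (fun j => r ^ (n+1) * r ^ j)).
    - intro j. change (norm (tail_term n z j)) with (Cmod (tail_term n z j)).
      unfold tail_term. assert (1 <= INR (n+1+j)) by (apply (le_INR 1); lia).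
      rewrite Cmod_div by (apply RtoC_nz; lra). rewrite Cmod_pow, Cmod_R, Rabs_pos_eq by lra.
      fold r. rewrite <- pow_add. pose proof (pow_le r (n+1+j) Hr0).
      assert (/ INR (n+1+j) <= 1).
      { replace 1 with (/1) by lra. apply Rinv_le_contravar; lra. }
      unfold Rdiv. nra.
    - apply (ex_series_scal_l (V := R_NormedModule)). apply ex_series_geom. rewrite Rabs_pos_eq; lra. }
  destruct Hex as [S HS]. exists S. split. exact HS.
  eapply Rle_lt_trans. apply (series_bound _ S Bd HS Hall).
  unfold Bd. apply Rmult_lt_compat_l. exact Hrn.
  assert (HHb : H <= ln (INR N + /2) - ln (INR n + /2)).
  { unfold H. replace (INR N) with (INR (n+1+m0)). apply harm. exact Hn. f_equal. unfold m0. lia. }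
  rewrite ln_mult by nra. 
  assert (Hly : ln y = ln c + ln (INR N + /2)).
  { unfold y. replace (1/2) with (/2) by lra. apply ln_mult; lra. }
  pose proof (ln_le_lin y ltac:(lra)). pose proof C3_gt. unfold C3.
  assert (3/8 * y + 2 / y <= 7/4).
  { apply (Rmult_le_reg_r y). lra. unfold Rdiv. rewrite Rmult_plus_distr_r.
    replace (2 * / y * y) with 2 by (field; lra). nra. }
  replace (1/2) with (/2) by lra. lra.
Qed.
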